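(* Consider $n$ buyers and $m$ datasets, where buyer $i$ has budget $b_i\in\mathbb{R}_{\ge0}$ and linear valuation $v_i(\mathbf{x})=\sum_j\tau_{i,j}x_j$ with $\tau_{i,j}\ge0$. For a price vector $\mathbf{p}\in\mathbb{R}_{\ge0}^m$, consider the linear pricing function $\mathbf{x}\mapsto\mathbf{p}^\top\mathbf{x}$ and let $r_i(\mathbf{p})=r(\mathbf{p}^\top\cdot\mid v_i,b_i)$. Then $$r_i(\mathbf{p})=\min\Big(b_i,\sum_{j\in[m]:\,\tau_{i,j}\ge p_j}p_j\Big).$$ Moreover, there exists a price vector $\hat{\mathbf{p}}\in\mathbb{R}^m_{\ge0}$ with $r_i(\hat{\mathbf{p}})\ge r_i(\mathbf{p})$ for every buyer $i$ and $\hat p_j\in\{\tau_{i,j}:i\in[n]\}$ for every dataset $j$.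
   Context: For a pricing function $\mathbf{q}:[0,1]^m\to\mathbb{R}_{\ge0}$ (monotone, $\mathbf{q}(\mathbf{0})=0$), valuation $v$ and budget $b$: $F(\mathbf{q}\mid b)=\{\mathbf{x}\in[0,1]^m:\mathbf{q}(\mathbf{x})\le b\}$, $u^*=\sup_{\mathbf{x}\in F}(v(\mathbf{x})-\mathbf{q}(\mathbf{x}))$, $\mathrm{Dem}(\mathbf{q}\mid v,b)=\{\mathbf{x}\in F:v(\mathbf{x})-\mathbf{q}(\mathbf{x})=u^*\}$, and revenue $r(\mathbf{q}\mid v,b)=\sup_{\mathbf{x}\in\mathrm{Dem}}\mathbf{q}(\mathbf{x})$. *)

(* Defs.v *)
From HB Require Import structures.
From mathcomp Require Import all_boot all_order all_algebra.
From mathcomp Require Import classical_sets boolp reals.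
Set Implicit Arguments. Unset Strict Implicit. Unset Printing Implicit Defensive.
Import Order.TTheory GRing.Theory Num.Theory.
Local Open Scope ring_scope.
Local Open Scope classical_set_scope.

Section Pricing.
Variables (R : realType) (m : nat).

Definition cube : set ('I_m -> R) := [set x | forall j, 0 <= x j <= 1].

Definition feasible (q : ('I_m -> R) -> R) (b : R) : set ('I_m -> R) :=
  [set x | cube x /\ q x <= b].

Definition opt_util (q v : ('I_m -> R) -> R) (b : R) : R :=
  sup [set v x - q x | x in feasible q b].

Definition demand (q v : ('I_m -> R) -> R) (b : R) : set ('I_m -> R) :=
  [set x | feasible q b x /\ v x - q x = opt_util q v b].

Definition revenue (q v : ('I_m -> R) -> R) (b : R) : R :=
  sup [set q x | x in demand q v b].

Definition lin_map (c : 'I_m -> R) : ('I_m -> R) -> R :=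
  fun x => \sum_(j < m) c j * x j.

End Pricing.

(* Main.v *)
Require Import Defs.
From HB Require Import structures.
From mathcomp Require Import all_boot all_order all_algebra.
From mathcomp Require Import classical_sets boolp reals.
From mathcomp Require Import ring lra.
Import Order.TTheory GRing.Theory Num.Theory.
Local Open Scope ring_scope.
Local Open Scope classical_set_scope.

Section Aux.
Variables (R : realType) (m : nat).
Implicit Types (p t x y : 'I_m -> R).

Lemma sup_eq_max (E : set R) (r : R) : E r -> ubound E r -> sup E = r.
Proof.
move=> Ex ub; apply/le_anti/andP; split; first by apply: ge_sup => //; exists r.
by apply: ub_le_sup => //; exists r.
Qed.

Lemma util_eq t p x :
  lin_map t x - lin_map p x = \sum_(j < m) (t j - p j) * x j.
Proof. by rewrite /lin_map -sumrB; apply: eq_bigr => j _; rewrite mulrBl. Qed.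

Lemma opt_lemma t p x (b lam : R) : 0 <= lam -> cube x -> lin_map p x <= b ->
  (0 < lam -> lin_map p x = b) ->
  (forall j, lam * p j < t j - p j -> x j = 1) ->
  (forall j, t j - p j < lam * p j -> x j = 0) ->
  forall y, feasible (lin_map p) b y ->
  \sum_(j < m) (t j - p j) * y j <= \sum_(j < m) (t j - p j) * x j.
Proof.
move=> lam0 cx px pxb h1 h0 y [cy py].
have key z : \sum_(j < m) (t j - p j) * z j =
   \sum_(j < m) (t j - p j - lam * p j) * z j + lam * lin_map p z.
  rewrite /lin_map mulr_sumr -big_split /=; apply: eq_bigr => j _.
  by ring.
rewrite !key; apply: lerD.
  apply: ler_sum => j _; have /andP[y0 y1] := cy j; have /andP[x0 x1] := cx j.
  case: (ltgtP (t j - p j - lam * p j) 0) => [hl|hg|he].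
  - rewrite h0; last by lra.
    by rewrite mulr0; apply: mulr_le0_ge0 => //; apply: ltW.
  - rewrite h1; last by lra.
    by rewrite mulr1; rewrite -[X in _ <= X]mulr1; apply: ler_wpM2l => //; apply: ltW.
  - by rewrite he !mul0r.
have [->|lp] := eqVneq lam 0; first by rewrite !mul0r.
have lp' : 0 < lam by rewrite lt_def lp lam0.
by rewrite (pxb lp'); apply: ler_wpM2l.
Qed.


Lemma exists_opt t p (b : R) : (forall j, 0 <= p j) -> 0 <= b ->
  exists x, feasible (lin_map p) b x /\
    (forall y, feasible (lin_map p) b y ->
       \sum_(j < m) (t j - p j) * y j <= \sum_(j < m) (t j - p j) * x j) /\
    lin_map p x = Num.min b (\sum_(j < m | p j <= t j) p j).
Proof.
move=> p0 b0.
set s := \sum_(j < m | p j <= t j) p j.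
have [sb|bs] := leP s b.
  pose x := fun j => if p j <= t j then 1 else 0 : R.
  have cx : cube x by move=> j; rewrite /x; case: ifP => _; rewrite ?lexx ?ler01.
  have px : lin_map p x = s.
    rewrite /lin_map /s [RHS]big_mkcond /=; apply: eq_bigr => j _.
    by rewrite /x; case: ifP => _; rewrite ?mulr1 ?mulr0.
  have pxb : lin_map p x <= b by rewrite px.
  have fx : feasible (lin_map p) b x by split.
  exists x; split => //; split; last by rewrite px.
  apply: (@opt_lemma t p x b 0) => //; first by move=> h; lra.
  - by move=> j; rewrite mul0r subr_gt0 /x => /ltW ->.
  - by move=> j; rewrite mul0r subr_lt0 /x => /lt_geF ->.
pose B lam := \sum_(j < m | lam * p j <= t j - p j) p j.
pose A lam := \sum_(j < m | lam * p j < t j - p j) p j.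
pose cand (k : option 'I_m) : R := if k is Some j then (t j - p j) / p j else 0.
pose P := fun k => (0 <= cand k) && (b <= B (cand k)).
have B0 : B 0 = s by apply: eq_bigl => j; rewrite mul0r subr_ge0.
have PN : P None by rewrite /P /= lexx B0 ltW.
have AleB lam : A lam <= B lam.
  rewrite /A /B [X in X <= _]big_mkcond [X in _ <= X]big_mkcond /=.
  apply: ler_sum => j _; case: ifP => h; first by rewrite (ltW h).
  by case: ifP.
have [k Pk kmax] := @arg_maxP _ _ _ None P cand PN.
set lam := cand k in Pk kmax *.
have /andP[lam0 bB] := Pk.
have Ab : A lam <= b.
  rewrite leNgt; apply/negP => bA.
  have [j1 Qj1] : exists j, (0 < p j) && (lam * p j < t j - p j).
    have [/existsP //|/existsPn hn] := boolP [exists j, (0 < p j) && (lam * p j < t j - p j)].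
    have : A lam = 0.
      apply: big1 => j hj; have := hn j; rewrite hj andbT lt_def p0 andbT negbK.
      by move/eqP.
    by move=> A0; move: bA; rewrite A0 ltNge b0.
  pose Q := fun j => (0 < p j) && (lam * p j < t j - p j).
  have [j0 Qj0 j0min] := @arg_minP _ _ _ j1 Q (fun j => (t j - p j) / p j) Qj1.
  have /andP[pj0 lj0] := Qj0.
  set mu := (t j0 - p j0) / p j0 in j0min.
  have lmu : lam < mu by rewrite /mu ltr_pdivlMr.
  have AB : A lam <= B mu.
    rewrite /A /B [X in X <= _]big_mkcond [X in _ <= X]big_mkcond /=.
    apply: ler_sum => j _; case: ifP => h; last by case: ifP.
    have [pj|pj] := boolP (0 < p j).
      have := j0min j; rewrite /Q pj h => /(_ isT) hm.
      by rewrite ifT // -ler_pdivlMr.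
    have -> : p j = 0 by apply/eqP; rewrite eq_le p0 andbT leNgt.
    by case: ifP.
  have : P (Some j0) by rewrite /P /= -/mu (ltW (le_lt_trans lam0 lmu)) /= (ltW (lt_le_trans bA AB)).
  by move/kmax; rewrite /= -/mu leNgt lmu.
pose E := \sum_(j < m | lam * p j == t j - p j) p j.
have BAE : B lam = A lam + E.
  rewrite /B /A /E big_mkcond [X in X + _]big_mkcond [X in _ + X]big_mkcond -big_split /=.
  apply: eq_bigr => j _; rewrite le_eqVlt.
  case: (ltgtP (lam * p j) (t j - p j)) => h /=; rewrite ?addr0 ?add0r //.
pose tt := if E == 0 then 0 else (b - A lam) / E.
have E0 : 0 <= E by rewrite /E sumr_ge0.
have tt01 : 0 <= tt <= 1.
  rewrite /tt; case: ifP => [_|/negbT hE]; first by rewrite lexx ler01.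
  have Ep : 0 < E by rewrite lt_def hE E0.
  rewrite divr_ge0 ?subr_ge0 ?(ltW Ep) //= ler_pdivrMr // mul1r; lra.
pose x := fun j => if lam * p j < t j - p j then 1
                   else if lam * p j == t j - p j then tt else 0.
have cx : cube x.
  move=> j; rewrite /x; case: ifP => _; first by rewrite lexx ler01.
  by case: ifP => _ //; rewrite lexx ler01.
have px : lin_map p x = b.
  have -> : lin_map p x = A lam + tt * E.
    rewrite /lin_map /A /E [X in _ = X + _]big_mkcond [X in _ = _ + _ * X]big_mkcond mulr_sumr -big_split /=.
    apply: eq_bigr => j _; rewrite /x.
    case: (ltgtP (lam * p j) (t j - p j)) => h /=; rewrite ?mulr0 ?mulr1 ?addr0 ?add0r //.
    by rewrite mulrC.
  rewrite /tt; case: ifP => [/eqP E00|/negbT hE].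
    by rewrite mul0r addr0; move: bB; rewrite BAE E00 addr0 => h; apply/le_anti; rewrite Ab h.
  by rewrite mulfVK // addrC subrK.
have pxb : lin_map p x <= b by rewrite px.
exists x; split; first by split.
split; last by rewrite px.
apply: (@opt_lemma t p x b lam) => //.
- by move=> j h; rewrite /x h.
- by move=> j h; rewrite /x ifF ?ifF //; [rewrite eq_sym lt_eqF // | rewrite lt_gtF].
Qed.


Lemma rev_formula t p (b : R) : (forall j, 0 <= p j) -> 0 <= b ->
  revenue (lin_map p) (lin_map t) b = Num.min b (\sum_(j < m | p j <= t j) p j).
Proof.
move=> p0 b0.
have [x [fx [opt px]]] := @exists_opt t p b p0 b0.
have ou : opt_util (lin_map p) (lin_map t) b = \sum_(j < m) (t j - p j) * x j.
  apply: sup_eq_max; first by exists x => //; rewrite util_eq.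
  by move=> r [y fy <-]; rewrite util_eq; apply: opt.
rewrite /revenue; apply: sup_eq_max.
  by exists x => //; split => //; rewrite ou util_eq.
move=> r [z [fz uz] <-]; rewrite ou util_eq in uz.
have [cz pzb] := fz.
rewrite le_min pzb /=.
pose z' k := if p k <= t k then z k else 0.
have fz' : feasible (lin_map p) b z'.
  split.
    move=> k; rewrite /z'; case: ifP => _; first exact: cz.
    by rewrite lexx ler01.
  apply: le_trans pzb; apply: ler_sum => k _; rewrite /z'; case: ifP => _ //.
  by rewrite mulr0 mulr_ge0 //; have /andP[] := cz k.
have h1 := opt z' fz'; rewrite -uz in h1.
have h2 : \sum_(k < m) (t k - p k) * z k <= \sum_(k < m) (t k - p k) * z' k.
  apply: ler_sum => k _; rewrite /z'; case: ifP => h //.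
  rewrite mulr0; apply: mulr_le0_ge0; last by have /andP[] := cz k.
  by move/negbT: h; rewrite -ltNge; lra.
have hsum : \sum_(k < m) ((t k - p k) * z' k - (t k - p k) * z k) = 0.
  by rewrite sumrB; apply/eqP; rewrite subr_eq0; apply/eqP/le_anti; rewrite h1 h2.
have zk k : ~~ (p k <= t k) -> z k = 0.
  move=> h.
  have H : forall i : 'I_m, predT i -> 0 <= (t i - p i) * z' i - (t i - p i) * z i.
    move=> i _; rewrite /z'; case: ifP => hi; first by rewrite subrr.
    rewrite mulr0 sub0r oppr_ge0; apply: mulr_le0_ge0; last by have /andP[] := cz i.
    by move/negbT: hi; rewrite -ltNge; lra.
  have := psumr_eq0P H hsum (i:=k) isT.
  rewrite /z' ifN // mulr0 sub0r => /eqP; rewrite oppr_eq0 mulf_eq0 => /orP[|/eqP //].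
  by move: h; rewrite -ltNge subr_eq0 => /lt_eqF; rewrite eq_sym => ->.
rewrite /lin_map [X in _ <= X]big_mkcond /=; apply: ler_sum => k _.
case: ifP => h; last by rewrite zk ?h // mulr0.
by have /andP[z0 z1] := cz k; rewrite ler_piMr.
Qed.

End Aux.

Theorem mainTheorem4 (R : realType) (n m : nat)
  (tau : 'I_n -> 'I_m -> R) (b : 'I_n -> R) :
  (0 < n)%N ->
  (forall i j, 0 <= tau i j) ->
  (forall i, 0 <= b i) ->
  (forall p : 'I_m -> R, (forall j, 0 <= p j) ->
     forall i, revenue (lin_map p) (lin_map (tau i)) (b i)
               = Num.min (b i) (\sum_(j < m | p j <= tau i j) p j)) /\
  (forall p : 'I_m -> R, (forall j, 0 <= p j) ->
     exists ph : 'I_m -> R,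
       (forall j, 0 <= ph j) /\
       (forall i, revenue (lin_map p) (lin_map (tau i)) (b i)
                  <= revenue (lin_map ph) (lin_map (tau i)) (b i)) /\
       (forall j, exists i, ph j = tau i j)).
Proof.
move=> n0 tau0 b0.
split; first by move=> p p0 i; apply: rev_formula.
move=> p p0.
pose i0 := Ordinal n0.
pose ph j := match [pick i | p j <= tau i j] with
  | Some i1 => tau (Order.arg_min i1 (fun i => p j <= tau i j) (fun i => tau i j)) j
  | None => tau i0 j end.
have phP j : exists2 k, ph j = tau k j & forall i, p j <= tau i j -> p j <= ph j <= tau i j.
  rewrite /ph; case: pickP => [i1 hi1|hn].
    case: (@arg_minP _ _ _ i1 (fun i => p j <= tau i j) (fun i => tau i j) hi1) => k Pk kmin.
    by exists k => // i hi; rewrite Pk kmin.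
  by exists i0 => // i hi; move: (hn i); rewrite hi.
exists ph; split; first by move=> j; have [k -> _] := phP j.
split; last by move=> j; have [k -> _] := phP j; exists k.
have ph0 j : 0 <= ph j by have [k -> _] := phP j.
move=> i; rewrite !rev_formula //; apply: le_min2 => //.
rewrite [X in X <= _]big_mkcond [X in _ <= X]big_mkcond /=; apply: ler_sum => j _.
case: ifP => h.
  by have [_ _ /(_ i h)/andP[c d]] := phP j; rewrite d.
by case: ifP.
Qed.
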